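(* Let $\mathfrak p,\mathfrak q$ be positive integers, $\omega=\mathfrak p/\mathfrak q$, $\nu=1/\mathfrak q$, and $\varepsilon=\omega^{2/(\alpha+1)}$. Then the function $$h(x,\tau)=\sum_{j=1}^n m_j\big[\phi_\alpha(\|x-\varepsilon x_j(\tau)\|)-\phi_\alpha(\|x\|)\big],\qquad x_j(\tau)=e^{-J\omega\tau/\nu}q_j(\tau/\nu),$$ is $2\pi$-periodic in $\tau$, and $\nabla_xh(x,\tau)=\mathcal O(\varepsilon^2)$.
   Context: Let $n\ge2$, $\alpha\ge1$, masses $m_1,\dots,m_n>0$ with $\sum_j m_j=1$, and let $q_1,\dots,q_n:\mathbb R\to\mathbb R^2$ be a collision-free $2\pi$-periodic solution of the $n$-body problem $\ddot q_j=-\sum_{k\ne j}m_k\frac{q_j-q_k}{\|q_j-q_k\|^{\alpha+1}}$ with center of mass $\sum_jm_jq_j(t)=0$. $\phi_\alpha(\lambda)=\frac1{\alpha-1}\lambda^{1-\alpha}$ for $\alpha>1$, $\phi_1(\lambda)=-\log\lambda$. $J=\begin{pmatrix}0&1\\-1&0\end{pmatrix}$, $e^{J\theta}=\cos\theta\,I+\sin\theta\,J$. The estimate $\mathcal O(\varepsilon^2)$ is meant as $\varepsilon\to0$, uniformly in $\tau$ and in $x$ ranging over compact subsets of $\mathbb R^2\setminus\{0\}$. *)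

(* Defs.v *)
From HB Require Import structures.
From mathcomp Require Import all_boot all_order all_algebra.
From mathcomp Require Import all_classical all_reals all_analysis.
Set Implicit Arguments. Unset Strict Implicit. Unset Printing Implicit Defensive.
Import Order.TTheory GRing.Theory Num.Theory.
Local Open Scope ring_scope.
Local Open Scope classical_set_scope.

Section Defs.
Variable R : realType.

Definition enorm (a b : R) : R := Num.sqrt (a ^+ 2 + b ^+ 2).

Definition phi (alpha lam : R) : R :=
  if alpha == 1 then - ln lam else (alpha - 1)^-1 * (lam `^ (1 - alpha)).

(* e^{J theta} (a,b) with J = [[0,1],[-1,0]], e^{J theta} = cos theta I + sin theta J *)
Definition rotJ1 (theta a b : R) : R := cos theta * a + sin theta * b.
Definition rotJ2 (theta a b : R) : R := - sin theta * a + cos theta * b.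

Definition omega (p q : nat) : R := p%:R / q%:R.
Definition nu (q : nat) : R := 1 / q%:R.
Definition eps (alpha : R) (p q : nat) : R := omega p q `^ (2 / (alpha + 1)).

Definition xj1 (q1 q2 : R -> R) (p q : nat) (tau : R) : R :=
  rotJ1 (- (omega p q * tau / nu q)) (q1 (tau / nu q)) (q2 (tau / nu q)).
Definition xj2 (q1 q2 : R -> R) (p q : nat) (tau : R) : R :=
  rotJ2 (- (omega p q * tau / nu q)) (q1 (tau / nu q)) (q2 (tau / nu q)).

Definition hfun (n : nat) (alpha : R) (m : 'I_n -> R) (q1 q2 : 'I_n -> R -> R)
  (p q : nat) (x : R * R) (tau : R) : R :=
  \sum_(j < n) m j *
    (phi alpha (enorm (x.1 - eps alpha p q * xj1 (q1 j) (q2 j) p q tau)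
                      (x.2 - eps alpha p q * xj2 (q1 j) (q2 j) p q tau))
     - phi alpha (enorm x.1 x.2)).

End Defs.

(* Main.v *)
Require Import Defs.
From HB Require Import structures.
From mathcomp Require Import all_boot all_order all_algebra.
From mathcomp Require Import all_classical all_reals all_analysis.
From mathcomp Require Import ring lra.
Import Order.TTheory GRing.Theory Num.Theory.
Local Open Scope ring_scope.
Local Open Scope classical_set_scope.

Module SubHelpers.
Set Implicit Arguments. Unset Strict Implicit.
Import numFieldNormedType.Exports.
Section Helpers.
Variable R : realType.

Lemma per_nat (g : R -> R) (T : R) : (forall t, g (t + T) = g t) ->
  forall (k : nat) t, g (t + k%:R * T) = g t.
Proof.
move=> hg; elim=> [|k IH] t; first by rewrite mul0r addr0.
by rewrite -addn1 natrD mulrDl mul1r addrA hg IH.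
Qed.

Lemma per_natN (g : R -> R) (T : R) : (forall t, g (t + T) = g t) ->
  forall (k : nat) t, g (t - k%:R * T) = g t.
Proof.
move=> hg k t; rewrite -[in RHS](subrK (k%:R * T) t).
by rewrite (per_nat hg).
Qed.

Lemma cos_per t : cos (t + 2 * pi) = cos t :> R.
Proof. by rewrite cosD mulr_natl cos2pi sin2pi mulr1 mulr0 subr0. Qed.
Lemma sin_per t : sin (t + 2 * pi) = sin t :> R.
Proof. by rewrite sinD mulr_natl cos2pi sin2pi mulr1 mulr0 addr0. Qed.

Lemma tau_shift (p q : nat) (tau : R) : (0 < q)%N ->
  (tau + 2 * pi) / nu R q = tau / nu R q + q%:R * (2 * pi) /\
  - (omega R p q * (tau + 2 * pi) / nu R q) = - (omega R p q * tau / nu R q) - p%:R * (2 * pi).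
Proof.
move=> q0; have qn : (q%:R : R) != 0 by rewrite pnatr_eq0 -lt0n.
rewrite /nu /omega; split; field; exact: qn.
Qed.

Lemma hfun_per n alpha (m : 'I_n -> R) q1 q2 (p q : nat) x tau :
  (forall j t, q1 j (t + 2 * pi) = q1 j t /\ q2 j (t + 2 * pi) = q2 j t) ->
  (0 < q)%N ->
  hfun alpha m q1 q2 p q x (tau + 2 * pi) = hfun alpha m q1 q2 p q x tau.
Proof.
move=> hp q0; rewrite /hfun; apply: eq_bigr => j _.
have [e1 e2] := tau_shift p tau q0.
rewrite /xj1 /xj2 e1 e2 /rotJ1 /rotJ2.
rewrite (per_nat (fun t => (hp j t).1)) (per_nat (fun t => (hp j t).2)).
by rewrite (per_natN cos_per) (per_natN sin_per).
Qed.

End Helpers.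

Section Helpers2.
Variable R : realType.

Definition Fphi (alpha w : R) : R :=
  if alpha == 1 then - (ln w / 2) else (alpha - 1)^-1 * w `^ ((1 - alpha) / 2).

Lemma phi_sqrt alpha w : 0 <= w -> phi alpha (Num.sqrt w) = Fphi alpha w.
Proof.
move=> w0; rewrite /phi /Fphi -powR12_sqrt //.
case: ifP => _; first by rewrite ln_powR mulrC.
by rewrite -powRrM [2^-1 * _]mulrC.
Qed.

Lemma is_derive_scal (f : R -> R) (c x df : R) :
  is_derive x 1 f df -> is_derive x 1 (fun u => c * f u) (c * df).
Proof. by move=> h; have := is_deriveZ c h. Qed.

Lemma is_derive_Fphi (alpha w : R) : 0 < w ->
  is_derive w 1 (Fphi alpha) (- (2^-1) * w `^ (- ((alpha + 1) / 2))).
Proof.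
move=> w0; rewrite /Fphi; case: eqP => [->|/eqP a1].
  have -> : - ((1 + 1) / 2) = -1 :> R by field.
  rewrite powR_inv1 ?ltW //.
  have -> : (fun u : R => - (ln u / 2)) = (fun u => (- 2^-1) * ln u).
    by apply/funext => u; rewrite mulNr mulrC.
  exact: is_derive_scal (is_derive1_ln w0).
apply: is_derive_eq; first exact: is_derive_scal (is_derive1_powR _ w0).
have -> : (1 - alpha) / 2 - 1 = - ((alpha + 1) / 2) by field.
rewrite mulrA; congr (_ * _); field.
by rewrite subr_eq0.
Qed.

Lemma is_derive_Q (c e s0 : R) :
  is_derive s0 1 (fun s : R => (s - c)^+2 + e^+2) (2 * (s0 - c)).
Proof.
have -> : (fun s : R => (s - c)^+2 + e^+2) =
  (((id : R -> R) - cst c) * ((id : R -> R) - cst c) + cst (e^+2)).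
  by apply/funext => s /=; rewrite expr2.
apply: is_derive_eq.
rewrite /= subr0 addr0 /GRing.scale /=. have -> : ((id : R -> R) - cst c) s0 = s0 - c by []. ring.
Qed.

Lemma is_derive_phi_term (alpha c e s0 : R) : 0 < (s0 - c)^+2 + e^+2 ->
  is_derive s0 1 (fun s => phi alpha (enorm (s - c) e))
    (- (s0 - c) * ((s0 - c)^+2 + e^+2) `^ (- ((alpha + 1) / 2))).
Proof.
move=> Q0.
have -> : (fun s => phi alpha (enorm (s - c) e)) =
   (Fphi alpha \o (fun s : R => (s - c)^+2 + e^+2)).
  apply/funext => s /=; rewrite /enorm phi_sqrt //.
  by rewrite addr_ge0 // sqr_ge0.
have h := @is_derive1_comp R (Fphi alpha) (fun s : R => (s - c)^+2 + e^+2) s0 _ _ (is_derive_Fphi alpha Q0) (is_derive_Q c e s0).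
apply: (is_derive_eq h).
by field.
Qed.

End Helpers2.

Section Helpers3.
Variable R : realType.

Definition btw (u v x : R) := (u <= x <= v) \/ (v <= x <= u).

Lemma mvt_bound (f df : R -> R) (u v B : R) :
  (forall x, btw u v x -> is_derive x 1 f (df x)) ->
  (forall x, btw u v x -> `|df x| <= B) ->
  `|f v - f u| <= B * `|v - u|.
Proof.
have key : forall a b : R, a <= b -> (forall x : R, a <= x <= b -> is_derive x 1 f (df x)) ->
   (forall x : R, a <= x <= b -> `|df x| <= B) -> `|f b - f a| <= B * `|b - a|.
  move=> a b ab hd hb.
  have hdv : {in `[a, b]%R, forall x, derivable f x 1}.
    by move=> x; rewrite in_itv /= => xi; have [] := hd x xi.
  have cont := derivable_within_continuous hdv.
  have hd' : forall x, x \in `]a, b[%R -> is_derive x 1 f (df x).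
    by move=> x; rewrite in_itv /= => /andP[h1 h2]; apply: hd; rewrite !ltW.
  have [c] := MVT_segment ab hd' cont.
  rewrite in_itv /= => ci ->; rewrite normrM ler_wpM2r //; exact: hb.
move=> hd hb; case: (leP u v) => uv.
  by apply: key => // x xi; [apply: hd | apply: hb]; left.
rewrite distrC [`|v - u|]distrC; apply: key; first exact: ltW.
  by move=> x xi; apply: hd; right.
by move=> x xi; apply: hb; right.
Qed.

Lemma powN_anti (g c A0 : R) : 0 <= g -> 0 < A0 -> A0 <= c -> c `^ (- g) <= A0 `^ (- g).
Proof.
move=> g0 A0p Ac; rewrite !powRN lef_pV2 ?posrE ?powR_gt0 //; last exact: lt_le_trans Ac.
by apply: ge0_ler_powR => //; rewrite nnegrE ltW // (lt_le_trans A0p).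
Qed.

Lemma is_derive_powN (b x : R) : 0 < x ->
  is_derive x 1 (fun w : R => w `^ (- b)) (- b * x `^ (- (b + 1))).
Proof.
move=> x0; apply: is_derive_eq; first exact: (is_derive1_powR (- b) x0).
by rewrite opprD.
Qed.

Lemma powN_lip (b A0 u v : R) : 0 <= b -> 0 < A0 -> A0 <= u -> A0 <= v ->
  `|v `^ (- b) - u `^ (- b)| <= b * A0 `^ (- (b + 1)) * `|v - u|.
Proof.
move=> b0 A0p Au Av.
apply: (@mvt_bound (fun w => w `^ (- b)) (fun w => - b * w `^ (- (b + 1)))).
  move=> x [/andP[h1 h2]|/andP[h1 h2]]; apply: is_derive_powN;
    apply: (lt_le_trans A0p); apply: le_trans h1; assumption.
move=> x hx; have Ax : A0 <= x by case: hx => /andP[h1 h2]; apply: le_trans h1.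
rewrite normrM normrN (ger0_norm b0) (ger0_norm (powR_ge0 _ _)).
by rewrite ler_wpM2l // powN_anti // addr_ge0.
Qed.

Lemma is_derive_shift (a x : R) : is_derive x 1 (fun t : R => a + t) 1.
Proof.
have -> : (fun t : R => a + t) = cst a + (id : R -> R) by apply/funext.
by apply: is_derive_eq; rewrite add0r.
Qed.

Lemma is_derive_lin (k x : R) : is_derive x 1 (fun t : R => k * t) k.
Proof.
have -> : (fun t : R => k * t) = k *: (id : R -> R) by apply/funext.
by apply: is_derive_eq; rewrite /GRing.scale /= mulr1.
Qed.

Lemma powN_tay2 (b A0 a d : R) : 0 <= b -> 0 < A0 -> A0 <= a -> `|d| <= A0 / 2 ->
  `|(a + d) `^ (- b) - a `^ (- b) + b * a `^ (- (b + 1)) * d|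
    <= b * (b + 1) * (A0 / 2) `^ (- (b + 2)) * d ^+ 2.
Proof.
move=> b0 A0p Aa hd.
have A2p : 0 < A0 / 2 by rewrite divr_gt0.
set g := fun t : R => (a + t) `^ (- b) + b * a `^ (- (b + 1)) * t.
set dg := fun t : R => - b * (a + t) `^ (- (b + 1)) + b * a `^ (- (b + 1)).
have hA : forall t, `|t| <= `|d| -> A0 / 2 <= a + t.
  move=> t ht; have := ler_normlW (le_trans ht hd).
  move: (ler_norml t (A0 / 2)); rewrite (le_trans ht hd) => /esym/andP[h1 _] _.
  lra.
have -> : (a + d) `^ (- b) - a `^ (- b) + b * a `^ (- (b + 1)) * d = g d - g 0.
  by rewrite /g addr0 mulr0 addr0; ring.
have -> : b * (b + 1) * (A0 / 2) `^ (- (b + 2)) * d ^+ 2 =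
   (b * ((b + 1) * (A0 / 2) `^ (- (b + 2)) * `|d|)) * `|d - 0|.
  by rewrite subr0 -[d ^+ 2](real_normK (num_real d)); ring.
apply: (@mvt_bound g dg).
  move=> x hx; have hx' : `|x| <= `|d|.
    by case: hx => /andP[h1 h2]; rewrite ler_norml; apply/andP; split;
       move: (ler_norml d `|d|); rewrite lexx => /esym/andP[h3 h4]; lra.
  have -> : g = (fun t => (a + t) `^ (- b)) + (fun t => b * a `^ (- (b + 1)) * t).
    by apply/funext => t.
  apply: is_deriveD.
    have h := @is_derive1_comp R (fun w => w `^ (- b)) (fun t => a + t) x _ _
      (is_derive_powN b (lt_le_trans A2p (hA x hx'))) (is_derive_shift a x).
    by rewrite mulr1 in h.
  exact: is_derive_lin.
move=> x hx; have hx' : `|x| <= `|d|.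
  by case: hx => /andP[h1 h2]; rewrite ler_norml; apply/andP; split;
     move: (ler_norml d `|d|); rewrite lexx => /esym/andP[h3 h4]; lra.
have -> : dg x = - (b * ((a + x) `^ (- (b + 1)) - (a) `^ (- (b + 1)))) by rewrite /dg; ring.
rewrite normrN normrM (ger0_norm b0) -mulrA ler_wpM2l //.
have := @powN_lip (b + 1) (A0 / 2) a (a + x) (addr_ge0 b0 ler01) A2p _ (hA x hx').
have -> : - (b + 1 + 1) = - (b + 2) by ring.
rewrite (addrC a x) addrK => h; apply: (le_trans (h _)).
  lra.
by rewrite -mulrA ler_wpM2l ?addr_ge0 // ler_wpM2l ?powR_ge0.
Qed.

End Helpers3.

Section Helpers4.
Variable R : realType.

Lemma combine_bound (x1 y1 P S Qa QA b e s X Y D L1 L2 : R) :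
  `|P| <= L2 * (e ^+ 2 * D ^+ 2) -> 0 <= Qa <= QA -> `|S| <= L1 * (e * D) ->
  `|x1| <= X -> `|y1| <= Y -> 0 <= b -> 0 <= s <= 2 * Y ^+ 2 -> 0 <= e ->
  0 <= D -> 0 <= L1 ->
  `|- x1 * (P - b * Qa * e ^+ 2 * s) + e * y1 * S|
    <= e ^+ 2 * (X * (L2 * D ^+ 2 + b * QA * (2 * Y ^+ 2)) + Y * L1 * D).
Proof.
move=> hP /andP[Q0 QQ] hS hx hy b0 /andP[s0 sY] e0 D0 L10.
have X0 : 0 <= X by apply: le_trans hx.
have Y0 : 0 <= Y by apply: le_trans hy.
apply: (le_trans (ler_normD _ _)).
rewrite !normrM normrN (ger0_norm e0).
have ht : `|b * Qa * e ^+ 2 * s| <= b * QA * (2 * Y ^+ 2) * e ^+ 2.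
  rewrite ger0_norm; last by rewrite !mulr_ge0 // exprn_ge0.
  rewrite [b * QA * _ * _]mulrAC; apply: ler_pM; rewrite ?mulr_ge0 ?exprn_ge0 //.
  by rewrite ler_wpM2r ?exprn_ge0 // ler_wpM2l.
have h1 : `|x1| * `|P - b * Qa * e ^+ 2 * s| <= X * (L2 * (e ^+ 2 * D ^+ 2) + b * QA * (2 * Y ^+ 2) * e ^+ 2).
  apply: ler_pM => //; apply: (le_trans (ler_normB _ _)); exact: lerD.
have h2 : e * `|y1| * `|S| <= e * Y * (L1 * (e * D)).
  by apply: ler_pM => //; rewrite ?mulr_ge0 // ler_wpM2l.
apply: (le_trans (lerD h1 h2)); rewrite le_eqVlt; apply/orP; left; apply/eqP; ring.
Qed.

Lemma ident_term (x1 x2 y1 y2 e b N a Nb Ab Ab1 : R) :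
  N - a = - (2 * e * (x1 * y1 + x2 * y2)) + e ^+ 2 * (y1 ^+ 2 + y2 ^+ 2) ->
  (- (x1 - e * y1) * Nb + x1 * Ab) - e * (- (2 * b) * Ab1 * x1 * (x1 * y1 + x2 * y2) + y1 * Ab)
  = - x1 * ((Nb - Ab + b * Ab1 * (N - a)) - b * Ab1 * e ^+ 2 * (y1 ^+ 2 + y2 ^+ 2))
    + e * y1 * (Nb - Ab).
Proof. by move=> h; rewrite h; ring. Qed.

Lemma sq_le (y Y : R) : `|y| <= Y -> y ^+ 2 <= Y ^+ 2.
Proof.
move=> h; rewrite -(real_normK (num_real y)) !expr2.
by apply: ler_pM => //; apply: normr_ge0.
Qed.

Lemma term_bound (b A0 X Y e x1 x2 y1 y2 : R) :
  0 <= b -> 0 < A0 -> A0 <= x1 ^+ 2 + x2 ^+ 2 -> `|x1| <= X -> `|x2| <= X ->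
  `|y1| <= Y -> `|y2| <= Y ->
  0 <= e <= 1 -> e * (4 * X * Y + 2 * Y ^+ 2) <= A0 / 2 ->
  `| (- (x1 - e * y1) * ((x1 - e * y1) ^+ 2 + (x2 - e * y2) ^+ 2) `^ (- b)
       + x1 * (x1 ^+ 2 + x2 ^+ 2) `^ (- b))
     - e * (- (2 * b) * (x1 ^+ 2 + x2 ^+ 2) `^ (- (b + 1)) * x1 * (x1 * y1 + x2 * y2)
            + y1 * (x1 ^+ 2 + x2 ^+ 2) `^ (- b)) |
  <= e ^+ 2 * (X * (b * (b + 1) * (A0 / 2) `^ (- (b + 2)) * (4 * X * Y + 2 * Y ^+ 2) ^+ 2
                    + b * A0 `^ (- (b + 1)) * (2 * Y ^+ 2))
               + Y * (b * (A0 / 2) `^ (- (b + 1))) * (4 * X * Y + 2 * Y ^+ 2)).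
Proof.
move=> b0 A0p Aa hx1 hx2 hy1 hy2 /andP[e0 e1] heD.
have X0 : 0 <= X by apply: le_trans hx1.
have Y0 : 0 <= Y by apply: le_trans hy1.
have D0 : 0 <= 4 * X * Y + 2 * Y ^+ 2 by rewrite addr_ge0 ?mulr_ge0 ?exprn_ge0.
have A2p : 0 < A0 / 2 by rewrite divr_gt0.
have dN : ((x1 - e * y1) ^+ 2 + (x2 - e * y2) ^+ 2) - (x1 ^+ 2 + x2 ^+ 2) =
   - (2 * e * (x1 * y1 + x2 * y2)) + e ^+ 2 * (y1 ^+ 2 + y2 ^+ 2) by ring.
have hs : 0 <= y1 ^+ 2 + y2 ^+ 2 <= 2 * Y ^+ 2.
  by rewrite addr_ge0 ?sqr_ge0 //=; have := sq_le hy1; have := sq_le hy2; lra.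
have hd : `|((x1 - e * y1) ^+ 2 + (x2 - e * y2) ^+ 2) - (x1 ^+ 2 + x2 ^+ 2)|
     <= e * (4 * X * Y + 2 * Y ^+ 2).
  rewrite dN (_ : - (2 * e * (x1 * y1 + x2 * y2)) + e ^+ 2 * (y1 ^+ 2 + y2 ^+ 2) = e * (- (2 * (x1 * y1 + x2 * y2)) + e * (y1 ^+ 2 + y2 ^+ 2))); last by ring.
  rewrite normrM (ger0_norm e0) ler_wpM2l //.
  have p1 : `|x1 * y1| <= X * Y by rewrite normrM; apply: ler_pM.
  have p2 : `|x2 * y2| <= X * Y by rewrite normrM; apply: ler_pM.
  have p3 : 0 <= e * (y1 ^+ 2 + y2 ^+ 2) <= 2 * Y ^+ 2.
    case/andP: hs => s0 s1; rewrite mulr_ge0 //=.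
    apply: le_trans s1; rewrite -[X in _ <= X]mul1r; exact: ler_wpM2r.
  move: p1 p2; rewrite !ler_norml => /andP[p1 p1'] /andP[p2 p2'].
  case/andP: p3 => p3 p3'.
  apply/andP; split; lra.
have hdA : `|((x1 - e * y1) ^+ 2 + (x2 - e * y2) ^+ 2) - (x1 ^+ 2 + x2 ^+ 2)| <= A0 / 2.
  exact: le_trans hd heD.
rewrite (ident_term b _ _ _ dN).
apply: combine_bound => //.
- have T := powN_tay2 b0 A0p Aa hdA.
  have eN : x1 ^+ 2 + x2 ^+ 2 + ((x1 - e * y1) ^+ 2 + (x2 - e * y2) ^+ 2 - (x1 ^+ 2 + x2 ^+ 2))
     = (x1 - e * y1) ^+ 2 + (x2 - e * y2) ^+ 2 by ring.
  rewrite eN in T; apply: (le_trans T); rewrite ler_wpM2l ?mulr_ge0 ?addr_ge0 ?powR_ge0 //.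
  rewrite -exprMn -(real_normK (num_real (_ - _))) !expr2.
  by apply: ler_pM => //; apply: normr_ge0.
- by rewrite powR_ge0 /= powN_anti // addr_ge0.
- have NA : A0 / 2 <= (x1 - e * y1) ^+ 2 + (x2 - e * y2) ^+ 2.
    move: hdA; rewrite ler_norml => /andP[h _]; lra.
  have T := powN_lip b0 A2p (_ : A0 / 2 <= x1 ^+ 2 + x2 ^+ 2) NA.
  apply: (le_trans (T _)); first lra.
  by rewrite ler_wpM2l // mulr_ge0 // powR_ge0.
- by rewrite mulr_ge0 // powR_ge0.
Qed.

Lemma N_lb (A0 X Y e x1 x2 y1 y2 : R) :
  0 < A0 -> A0 <= x1 ^+ 2 + x2 ^+ 2 -> `|x1| <= X -> `|x2| <= X ->
  `|y1| <= Y -> `|y2| <= Y ->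
  0 <= e <= 1 -> e * (4 * X * Y + 2 * Y ^+ 2) <= A0 / 2 ->
  A0 / 2 <= (x1 - e * y1) ^+ 2 + (x2 - e * y2) ^+ 2.
Proof.
move=> A0p Aa hx1 hx2 hy1 hy2 /andP[e0 e1] heD.
have X0 : 0 <= X by apply: le_trans hx1.
have Y0 : 0 <= Y by apply: le_trans hy1.
have dN : ((x1 - e * y1) ^+ 2 + (x2 - e * y2) ^+ 2) - (x1 ^+ 2 + x2 ^+ 2) =
   - (2 * e * (x1 * y1 + x2 * y2)) + e ^+ 2 * (y1 ^+ 2 + y2 ^+ 2) by ring.
have hs : 0 <= y1 ^+ 2 + y2 ^+ 2 <= 2 * Y ^+ 2.
  by rewrite addr_ge0 ?sqr_ge0 //=; have := sq_le hy1; have := sq_le hy2; lra.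
have hd : `|((x1 - e * y1) ^+ 2 + (x2 - e * y2) ^+ 2) - (x1 ^+ 2 + x2 ^+ 2)|
     <= e * (4 * X * Y + 2 * Y ^+ 2).
  rewrite dN (_ : - (2 * e * (x1 * y1 + x2 * y2)) + e ^+ 2 * (y1 ^+ 2 + y2 ^+ 2) = e * (- (2 * (x1 * y1 + x2 * y2)) + e * (y1 ^+ 2 + y2 ^+ 2))); last by ring.
  rewrite normrM (ger0_norm e0) ler_wpM2l //.
  have p1 : `|x1 * y1| <= X * Y by rewrite normrM; apply: ler_pM.
  have p2 : `|x2 * y2| <= X * Y by rewrite normrM; apply: ler_pM.
  have p3 : 0 <= e * (y1 ^+ 2 + y2 ^+ 2) <= 2 * Y ^+ 2.
    case/andP: hs => s0 s1; rewrite mulr_ge0 //=.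
    apply: le_trans s1; rewrite -[X in _ <= X]mul1r; exact: ler_wpM2r.
  move: p1 p2; rewrite !ler_norml => /andP[p1 p1'] /andP[p2 p2'].
  case/andP: p3 => p3 p3'.
  apply/andP; split; lra.
have := le_trans hd heD; rewrite ler_norml => /andP[h _]; lra.
Qed.

End Helpers4.

Section Helpers5.
Variable R : realType.

Lemma per_int (g : R -> R) (T : R) : (forall t, g (t + T) = g t) ->
  forall (k : int) t, g (t + k%:~R * T) = g t.
Proof.
move=> hg [k|k] t; first by rewrite -pmulrn (per_nat hg).
by rewrite NegzE mulrNz mulNr -pmulrn (per_natN hg).
Qed.

Lemma per_bounded (g : R -> R) : continuous g -> (forall t, g (t + 2 * pi) = g t) ->
  exists B, forall t, `|g t| <= B.
Proof.
move=> gc hg.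
have P0 : 0 < 2 * pi :> R by rewrite mulr_gt0 ?pi_gt0.
have hcont : {within `[0, 2 * pi], continuous (fun t => `|g t|)}.
  apply: continuous_subspaceT => x; apply: continuous_comp; first exact: gc.
  exact: norm_continuous.
have [c _ hc] := @EVT_max R (fun t => `|g t|) 0 (2 * pi) (ltW P0) hcont.
exists `|g c| => t.
set k := Num.floor (t / (2 * pi)).
have := per_int hg (- k) t.
rewrite mulrNz mulNr => <-; apply: hc.
have := floor_itv (t / (2 * pi)); rewrite -/k intrD /= => /andP[h1 h2].
rewrite in_itv /=; apply/andP; split.
  by rewrite subr_ge0 -ler_pdivlMr.
have h3 : t < (k%:~R + 1) * (2 * pi) by rewrite -ltr_pdivrMr.
rewrite mulrDl mul1r in h3; lra.
Qed.

Lemma compact_facts (K : set (R^o * R^o)%type) : compact K -> ~ K (0, 0) ->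
  exists X A0 : R, 0 < A0 /\ 0 <= X /\
    forall x, K x -> `|x.1| <= X /\ `|x.2| <= X /\ A0 <= x.1 ^+ 2 + x.2 ^+ 2.
Proof.
move=> cK nK0.
have [[x0 Kx0]|Ke] := pselect (exists x, K x); last first.
  exists 0, 1; split => //; split => // x Kx; exfalso; apply: Ke; by exists x.
pose f := fun x : (R^o * R^o)%type => ((x.1 : R) ^+ 2 + (x.2 : R) ^+ 2 : R).
have fc : {within K, continuous f}.
  apply: continuous_subspaceT => x; apply: cvgD; rewrite /GRing.exp /=; apply: cvgM; 
    [exact: cvg_fst|exact: cvg_fst|exact: cvg_snd|exact: cvg_snd].
have [c Kc hc] := compact_EVT_min (ex_intro _ x0 Kx0) cK fc.
have [c' Kc' hc'] := compact_EVT_max (ex_intro _ x0 Kx0) cK fc.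
move: Kc Kc'; rewrite !inE => Kc Kc'.
have fcp : 0 < f c.
  have s1 := sqr_ge0 (c.1 : R); have s2 := sqr_ge0 (c.2 : R).
  have hn : f c != 0.
    apply/eqP; rewrite /f => h.
    have /eqP : (c.1 : R) ^+ 2 = 0 by lra.
    have /eqP : (c.2 : R) ^+ 2 = 0 by lra.
    rewrite !sqrf_eq0 => /eqP h2 /eqP h1; apply: nK0.
    by move: Kc; case: c h1 h2 {hc h s1 s2} => /= u v -> ->.
  rewrite lt_neqAle eq_sym hn /=; rewrite /f; lra.
exists (1 + f c'), (f c); split => //; split.
  by rewrite addr_ge0 // addr_ge0 ?sqr_ge0.
move=> x Kx; have := hc x; have := hc' x; rewrite inE => /(_ Kx) h1 /(_ Kx) h2.
move: h1 h2; rewrite /f !ler_norml => h1 h2.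
have s1 := sqr_ge0 (x.1 : R); have s2 := sqr_ge0 (x.2 : R).
split; [apply/andP; split | split => //]; nra.
Qed.

End Helpers5.

Section Helpers6.
Variable R : realType.

Lemma is_derive_sub (f g : R -> R) (x df dg : R) :
  is_derive x 1 f df -> is_derive x 1 g dg -> is_derive x 1 (fun s => f s - g s) (df - dg).
Proof. by move=> h1 h2; have := is_deriveB h1 h2. Qed.

Lemma is_derive_bigsum n (F : 'I_n -> R -> R) (dF : 'I_n -> R) (x : R) :
  (forall j, is_derive x 1 (F j) (dF j)) ->
  is_derive x 1 (fun s => \sum_(j < n) F j s) (\sum_(j < n) dF j).
Proof. by move=> h; have := is_derive_sum h; rewrite fct_sumE. Qed.

Lemma is_derive_phi0 (alpha e s0 : R) : 0 < s0 ^+ 2 + e ^+ 2 ->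
  is_derive s0 1 (fun s => phi alpha (enorm s e))
    (- s0 * (s0 ^+ 2 + e ^+ 2) `^ (- ((alpha + 1) / 2))).
Proof.
move=> h; have := @is_derive_phi_term R alpha 0 e s0; rewrite subr0 => /(_ h).
by have -> : (fun s => phi alpha (enorm (s - 0) e)) = (fun s => phi alpha (enorm s e))
  by apply/funext => s; rewrite subr0.
Qed.

Lemma enormC (a b : R) : enorm a b = enorm b a.
Proof. by rewrite /enorm addrC. Qed.

Lemma sum_bound n (m T L : 'I_n -> R) (C : R) :
  (forall j, 0 < m j) -> \sum_(j < n) m j = 1 -> \sum_(j < n) m j * L j = 0 ->
  (forall j, `|T j - L j| <= C) -> `|\sum_(j < n) m j * T j| <= C.
Proof.
move=> mp m1 L0 hT.
have -> : \sum_(j < n) m j * T j = \sum_(j < n) m j * (T j - L j).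
  rewrite [RHS](eq_bigr (fun j => m j * T j - m j * L j)); last by move=> j _; ring.
  by rewrite sumrB L0 subr0.
apply: (le_trans (ler_norm_sum _ _ _)).
rewrite -[C]mul1r -m1 mulr_suml; apply: ler_sum => j _.
by rewrite normrM (gtr0_norm (mp j)) ler_wpM2l // ltW.
Qed.

Lemma lin_sum0 n (m u v : 'I_n -> R) (a b : R) :
  \sum_(j < n) m j * u j = 0 -> \sum_(j < n) m j * v j = 0 ->
  \sum_(j < n) m j * (a * u j + b * v j) = 0.
Proof.
move=> hu hv.
have -> : \sum_(j < n) m j * (a * u j + b * v j) =
   a * \sum_(j < n) m j * u j + b * \sum_(j < n) m j * v j.
  rewrite !mulr_sumr -big_split; apply: eq_bigr => j _ /=; ring.
by rewrite hu hv !mulr0 addr0.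
Qed.

Lemma le_sum_norm n (B : 'I_n -> R) j : B j <= \sum_(i < n) `|B i|.
Proof.
rewrite (bigD1 j) //= -[B j]addr0; apply: lerD; first by rewrite addr0 real_ler_norm // num_real.
by apply: sumr_ge0 => i _.
Qed.

Lemma deriv_cont (g : R -> R) : (forall x, derivable g x 1) -> continuous g.
Proof. move=> h x; apply: differentiable_continuous; apply/derivable1_diffP; exact: h. Qed.

Lemma enorm_le (a b : R) : enorm a b <= `|a| + `|b|.
Proof.
have h : a ^+ 2 + b ^+ 2 <= (`|a| + `|b|) ^+ 2.
  rewrite sqrrD -!(real_normK (num_real a)) -!(real_normK (num_real b)).
  by rewrite -addrA lerD2l lerDr mulrn_wge0 // mulr_ge0.
have := ler_wsqrtr h; rewrite sqrtr_sqr ger0_norm // addr_ge0.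
Qed.

End Helpers6.

End SubHelpers.
Import SubHelpers.
Unset Implicit Arguments. Set Strict Implicit.

Theorem proposition2 (R : realType) (n : nat) (alpha : R)
  (m : 'I_n -> R) (q1 q2 : 'I_n -> R -> R) :
  (2 <= n)%N -> 1 <= alpha ->
  (forall j, 0 < m j) -> \sum_(j < n) m j = 1 ->
  (* q_j is 2pi-periodic *)
  (forall j t, q1 j (t + 2 * pi) = q1 j t /\ q2 j (t + 2 * pi) = q2 j t) ->
  (* collision-free *)
  (forall j k t, j != k -> (q1 j t, q2 j t) != (q1 k t, q2 k t)) ->
  (* solution of the n-body problem *)
  (forall j t,
     derivable (q1 j) t 1 /\ derivable (q2 j) t 1 /\
     derivable (derive1 (q1 j)) t 1 /\ derivable (derive1 (q2 j)) t 1 /\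
     derive1 (derive1 (q1 j)) t = - \sum_(k < n | k != j) m k * (q1 j t - q1 k t) /
        (enorm (q1 j t - q1 k t) (q2 j t - q2 k t)) `^ (alpha + 1) /\
     derive1 (derive1 (q2 j)) t = - \sum_(k < n | k != j) m k * (q2 j t - q2 k t) /
        (enorm (q1 j t - q1 k t) (q2 j t - q2 k t)) `^ (alpha + 1)) ->
  (* center of mass at the origin *)
  (forall t, \sum_(j < n) m j * q1 j t = 0 /\ \sum_(j < n) m j * q2 j t = 0) ->
  (* h is 2pi-periodic in tau *)
  (forall (p q : nat), (0 < p)%N -> (0 < q)%N -> forall (x : R * R) (tau : R),
     hfun alpha m q1 q2 p q x (tau + 2 * pi) = hfun alpha m q1 q2 p q x tau)
  /\
  (* grad_x h = O(eps^2) as eps -> 0, uniformly in tau and x in compacts of R^2 \ {0} *)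
  (forall K : set (R^o * R^o)%type, compact K -> ~ K (0, 0) ->
     exists C : R, exists delta : R, 0 < delta /\
       forall (p q : nat), (0 < p)%N -> (0 < q)%N -> eps alpha p q < delta ->
       forall (tau : R) (x : R * R), K x ->
         derivable (fun s => hfun alpha m q1 q2 p q (s, x.2) tau) x.1 1 /\
         derivable (fun s => hfun alpha m q1 q2 p q (x.1, s) tau) x.2 1 /\
         enorm (derive1 (fun s => hfun alpha m q1 q2 p q (s, x.2) tau) x.1)
               (derive1 (fun s => hfun alpha m q1 q2 p q (x.1, s) tau) x.2)
           <= C * (eps alpha p q) ^+ 2).
Proof.
move=> n2 a1 mpos m1 hper hcoll hsol hcm.
split.
  by move=> p q p0 q0 x tau; apply: hfun_per.
move=> K cK nK0.
have qc1 := fun j => deriv_cont (fun t => (hsol j t).1).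
have qc2 := fun j => deriv_cont (fun t => (hsol j t).2.1).
have hb : forall j, exists B : R, forall t, `|q1 j t| <= B /\ `|q2 j t| <= B.
  move=> j; have [B1 h1] := per_bounded (qc1 j) (fun t => (hper j t).1).
  have [B2 h2] := per_bounded (qc2 j) (fun t => (hper j t).2).
  have B10 := le_trans (normr_ge0 _) (h1 0).
  have B20 := le_trans (normr_ge0 _) (h2 0).
  exists (B1 + B2) => t; have := h1 t; have := h2 t; lra.
have [Bf hBf] := choice hb.
pose B := \sum_(j < n) `|Bf j|.
have hB : forall j t, `|q1 j t| <= B /\ `|q2 j t| <= B.
  move=> j t; have [h1 h2] := hBf j t; have := le_sum_norm Bf j.
  by rewrite -/B => h; split; apply: le_trans h.
have B0 : 0 <= B by apply: sumr_ge0.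
pose Y := 2 * B.
have [X [A0 [A0p [X0 hK]]]] := compact_facts cK nK0.
pose b := (alpha + 1) / 2.
have b0 : 0 <= b by rewrite /b; lra.
pose D := 4 * X * Y + 2 * Y ^+ 2.
pose Cst := X * (b * (b + 1) * (A0 / 2) `^ (- (b + 2)) * D ^+ 2
                    + b * A0 `^ (- (b + 1)) * (2 * Y ^+ 2))
               + Y * (b * (A0 / 2) `^ (- (b + 1))) * D.
have D0 : 0 <= D by rewrite /D /Y addr_ge0 ?mulr_ge0 ?sqr_ge0.
exists (2 * Cst), (Num.min 1 (A0 / (2 * (D + 1)))).
split.
  by rewrite lt_min ltr01 /= divr_gt0 // mulr_gt0 // ltr_wpDl.
move=> p q p0 q0 epsd tau x Kx.
have [hx1 [hx2 hA]] := hK x Kx.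
set e := eps alpha p q.
have e0 : 0 <= e by apply: powR_ge0.
move: epsd; rewrite -/e lt_min => /andP[e1 e2].
have e01 : 0 <= e <= 1 by rewrite e0 ltW.
have heD : e * D <= A0 / 2.
  have h2 : 0 < 2 * (D + 1) by rewrite mulr_gt0 // ltr_wpDl.
  move: e2; rewrite ltr_pdivlMr // mulrCA => e2.
  have : e * D <= e * (D + 1) by rewrite ler_wpM2l // lerDl.
  lra.
pose th := - (omega R p q * tau / nu R q).
pose t0 := tau / nu R q.
pose y1 := fun j => xj1 (q1 j) (q2 j) p q tau.
pose y2 := fun j => xj2 (q1 j) (q2 j) p q tau.
have hy : forall j, `|y1 j| <= Y /\ `|y2 j| <= Y.
  move=> j; have [h1 h2] := hB j t0.
  rewrite /y1 /y2 /xj1 /xj2 /rotJ1 /rotJ2 -/t0 -/th /Y.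
  have c1 := cos_max th; have s1 := sin_max th.
  have k1 : `|cos th * q1 j t0| <= B by rewrite normrM -[B]mul1r; apply: ler_pM.
  have k2 : `|sin th * q2 j t0| <= B by rewrite normrM -[B]mul1r; apply: ler_pM.
  have k3 : `|- sin th * q1 j t0| <= B by rewrite normrM normrN -[B]mul1r; apply: ler_pM.
  have k4 : `|cos th * q2 j t0| <= B by rewrite normrM -[B]mul1r; apply: ler_pM.
  split; apply: (le_trans (ler_normD _ _)); lra.
have cm1 : \sum_(j < n) m j * y1 j = 0.
  have [h1 h2] := hcm t0.
  by rewrite /y1 /xj1 /rotJ1 -/t0 -/th; apply: lin_sum0.
have cm2 : \sum_(j < n) m j * y2 j = 0.
  have [h1 h2] := hcm t0.
  by rewrite /y2 /xj2 /rotJ2 -/t0 -/th; apply: lin_sum0.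
have A2p : 0 < A0 / 2 by rewrite divr_gt0.
have Npos : forall j, 0 < (x.1 - e * y1 j) ^+ 2 + (x.2 - e * y2 j) ^+ 2.
  move=> j; apply: lt_le_trans A2p _.
  exact: N_lb A0p hA hx1 hx2 (hy j).1 (hy j).2 e01 heD.
have hA' : A0 <= x.2 ^+ 2 + x.1 ^+ 2 by rewrite addrC.
have Npos' : forall j, 0 < (x.2 - e * y2 j) ^+ 2 + (x.1 - e * y1 j) ^+ 2.
  by move=> j; rewrite addrC.
have a0 : 0 < x.1 ^+ 2 + x.2 ^+ 2 by apply: lt_le_trans A0p hA.
have a0' : 0 < x.2 ^+ 2 + x.1 ^+ 2 by rewrite addrC.
pose T1 := fun j => - (x.1 - e * y1 j) * ((x.1 - e * y1 j) ^+ 2 + (x.2 - e * y2 j) ^+ 2) `^ (- b)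
   + x.1 * (x.1 ^+ 2 + x.2 ^+ 2) `^ (- b).
pose T2 := fun j => - (x.2 - e * y2 j) * ((x.2 - e * y2 j) ^+ 2 + (x.1 - e * y1 j) ^+ 2) `^ (- b)
   + x.2 * (x.2 ^+ 2 + x.1 ^+ 2) `^ (- b).
have hd1 : is_derive x.1 1 (fun s => hfun alpha m q1 q2 p q (s, x.2) tau)
                        (\sum_(j < n) m j * T1 j).
  rewrite /hfun /=.
  apply: is_derive_bigsum => j.
  apply: is_derive_eq.
    apply: is_derive_scal; apply: is_derive_sub.
      exact: is_derive_phi_term (Npos j).
    exact: is_derive_phi0.
  by rewrite /T1 /y1 /y2 /b; ring.
have hd2 : is_derive x.2 1 (fun s => hfun alpha m q1 q2 p q (x.1, s) tau)
                        (\sum_(j < n) m j * T2 j).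
  have -> : (fun s => hfun alpha m q1 q2 p q (x.1, s) tau) =
     (fun s => \sum_(j < n) m j * (phi alpha (enorm (s - e * y2 j) (x.1 - e * y1 j))
                                   - phi alpha (enorm s x.1))).
    by apply/funext => s; rewrite /hfun /=; apply: eq_bigr => j _; rewrite enormC (enormC s).
  apply: is_derive_bigsum => j.
  apply: is_derive_eq.
    apply: is_derive_scal; apply: is_derive_sub.
      exact: is_derive_phi_term (Npos' j).
    exact: is_derive_phi0.
  by rewrite /T2 /y1 /y2 /b; ring.
split; first exact: (@ex_derive _ _ _ _ _ _ _ hd1).
split; first exact: (@ex_derive _ _ _ _ _ _ _ hd2).
rewrite !derive1E (@derive_val _ _ _ _ _ _ _ hd1) (@derive_val _ _ _ _ _ _ _ hd2).
apply: (le_trans (enorm_le _ _)).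
pose A := (x.1 ^+ 2 + x.2 ^+ 2) `^ (- b).
pose A1 := (x.1 ^+ 2 + x.2 ^+ 2) `^ (- (b + 1)).
pose A' := (x.2 ^+ 2 + x.1 ^+ 2) `^ (- b).
pose A1' := (x.2 ^+ 2 + x.1 ^+ 2) `^ (- (b + 1)).
have s1 : `|\sum_(j < n) m j * T1 j| <= e ^+ 2 * Cst.
  apply: (@sum_bound _ _ m T1
    (fun j => e * (- (2 * b) * A1 * x.1 * (x.1 * y1 j + x.2 * y2 j) + y1 j * A))) => //.
    rewrite (eq_bigr (fun j => m j * ((e * (- (2 * b) * A1 * x.1 * x.1 + A)) * y1 j
                                   + (e * (- (2 * b) * A1 * x.1 * x.2)) * y2 j))).
      exact: lin_sum0.
    by move=> j _; ring.
  move=> j; exact: term_bound b0 A0p hA hx1 hx2 (hy j).1 (hy j).2 e01 heD.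
have s2 : `|\sum_(j < n) m j * T2 j| <= e ^+ 2 * Cst.
  apply: (@sum_bound _ _ m T2
    (fun j => e * (- (2 * b) * A1' * x.2 * (x.2 * y2 j + x.1 * y1 j) + y2 j * A'))) => //.
    rewrite (eq_bigr (fun j => m j * ((e * (- (2 * b) * A1' * x.2 * x.1)) * y1 j
                                   + (e * (- (2 * b) * A1' * x.2 * x.2 + A')) * y2 j))).
      exact: lin_sum0.
    by move=> j _; ring.
  move=> j; exact: term_bound b0 A0p hA' hx2 hx1 (hy j).2 (hy j).1 e01 heD.
lra.
Qed.
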